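(* Let $A$ be a finite set and $p : A \to [0,1]$. Let $\{X_i(u)\}_{i \ge 1, u \in A}$ be independent random variables with $X_i(u) \sim \mathrm{Bernoulli}(p(u))$. For $n \ge 1$ define $U_n(u) := \mathds{1}\{\sum_{i=1}^n X_i(u) = 1\}$, $\hat R_n := \frac{1}{n}\sum_{u \in A} U_n(u)$, and $\lambda := \sum_{u \in A} p(u)$. Then for every integer $s \ge 3$ and every $\delta \in (0,1)$, \[ \mathbb{P}\left( \hat R_s \le \hat R_{s-1} - \frac{\lambda}{e(s-2)} - \sqrt{\frac{2\lambda}{s-1}\log(1/\delta)} - \frac{1}{3(s-1)}\log(1/\delta) \right) \le \delta . \]
   Context: Model: a single influencer is connected to a finite set $A$ of basic nodes; at each selection $i$, each node $u\in A$ is activated independently with probability $p(u)$, independently across selections. $\hat R_n$ is the Good-Turing estimator of the remaining potential after $n$ selections; $e$ is Euler's number. *)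

(* Defs.v *)
From Stdlib Require Import Reals.
From mathcomp Require Import all_boot.
Set Implicit Arguments. Unset Strict Implicit. Unset Printing Implicit Defensive.

Local Open Scope R_scope.
Definition Rleb (x y : R) : bool := if Rle_dec x y then true else false.

(* Sample space for the first s selections: an outcome w assigns to each
   selection index i : 'I_s (selection i+1) and node u the activation bit
   X_{i+1}(u) = w (i, u). *)
Definition outcome (A : finType) (s : nat) := {ffun 'I_s * A -> bool}.

Definition weight (A : finType) (s : nat) (p : A -> R) (w : outcome A s) : R :=
  \big[Rmult/1]_(k : 'I_s * A) (if w k then p k.2 else (1 - p k.2)).

Definition prob (A : finType) (s : nat) (p : A -> R) (E : outcome A s -> bool) : R :=
  \big[Rplus/0]_(w : outcome A s | E w) weight p w.

Definition nact (A : finType) (s : nat) (w : outcome A s) (n : nat) (u : A) : nat :=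
  #|[set i : 'I_s | (i < n)%N && w (i, u)]|.

Definition Un (A : finType) (s : nat) (w : outcome A s) (n : nat) (u : A) : bool :=
  nact w n u == 1%N.

Definition Rhat (A : finType) (s : nat) (w : outcome A s) (n : nat) : R :=
  (INR #|[set u : A | Un w n u]| / INR n).

Definition lam (A : finType) (p : A -> R) : R := \big[Rplus/0]_(u : A) p u.

(* Main.v *)
From Stdlib Require Import Reals Lra.
From Coquelicot Require Import Coquelicot.
From mathcomp Require Import all_boot.
From mathcomp Require Import Rstruct.
Require Import Defs.
Set Implicit Arguments. Unset Strict Implicit. Unset Printing Implicit Defensive.
Local Open Scope R_scope.

Lemma sumR_le (I : finType) (P : pred I) (F G : I -> R) :
  (forall i, P i -> F i <= G i) ->
  \big[Rplus/0]_(i | P i) F i <= \big[Rplus/0]_(i | P i) G i.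
Proof. move=> H; apply: (big_ind2 (fun x y => x <= y)) => //; [lra| move=> *; lra]. Qed.

Lemma sumR_ge0 (I : finType) (P : pred I) (F : I -> R) :
  (forall i, P i -> 0 <= F i) -> 0 <= \big[Rplus/0]_(i | P i) F i.
Proof. move=> H; apply: (big_ind (fun x => 0 <= x)) => //; [lra| move=> *; lra]. Qed.

Lemma prodR_ge0 (I : finType) (P : pred I) (F : I -> R) :
  (forall i, P i -> 0 <= F i) -> 0 <= \big[Rmult/1]_(i | P i) F i.
Proof. move=> H; apply: (big_ind (fun x => 0 <= x)) => //; [lra| move=> *; nra]. Qed.

Lemma prodR_le (I : finType) (P : pred I) (F G : I -> R) :
  (forall i, P i -> 0 <= F i <= G i) ->
  \big[Rmult/1]_(i | P i) F i <= \big[Rmult/1]_(i | P i) G i.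
Proof.
move=> H.
suff : 0 <= \big[Rmult/1]_(i | P i) F i <= \big[Rmult/1]_(i | P i) G i by case.
apply: (big_ind2 (fun x y => 0 <= x <= y)) => //; first lra.
move=> a b c d [h1 h2] [h3 h4]; split; [nra|].
apply: Rmult_le_compat; lra.
Qed.

Lemma exp_sum (I : finType) (P : pred I) (F : I -> R) :
  exp (\big[Rplus/0]_(i | P i) F i) = \big[Rmult/1]_(i | P i) exp (F i).
Proof. apply: (big_morph exp) => //; [move=> x y; exact: exp_plus | exact: exp_0]. Qed.

Lemma mul_sum (I : finType) (P : pred I) (F : I -> R) a :
  a * \big[Rplus/0]_(i | P i) F i = \big[Rplus/0]_(i | P i) (a * F i).
Proof. by rewrite big_distrr. Qed.

Lemma iter_pow (a : R) k : iter k (Rmult a) 1 = a ^ k.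
Proof. by elim: k => //= k ->. Qed.

Lemma iter_sum (a : R) k : iter k (Rplus a) 0 = INR k * a.
Proof. elim: k => [/=|k IH]; first lra. rewrite S_INR /= IH; lra. Qed.

Lemma INR_card (T : finType) (P : pred T) :
  INR #|[set x | P x]| = \big[Rplus/0]_x (if P x then 1 else 0).
Proof.
rewrite -sum1_card big_mkcond /=.
rewrite (big_morph INR (id1 := 0) (op1 := Rplus)) //; last by move=> x y; exact: plus_INR.
by apply: eq_bigr => x _; rewrite inE; case: (P x).
Qed.

Lemma card_lt (s k : nat) : (k <= s)%N -> #|[pred j : 'I_s | (j < k)%N]| = k.
Proof.
move=> ks.
rewrite -sum1_card.
rewrite (eq_bigl (fun i : 'I_s => true && (i < k)%N)) //.
rewrite (big_ord_narrow_cond (P := xpredT)) /=.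
- by [].
- by rewrite sum1_card card_ord.
Qed.

Definition col (A : finType) (s : nat) (w : outcome A s) (u : A) : {ffun 'I_s -> bool} :=
  [ffun i => w (i, u)].
Definition colw (s : nat) (x : R) (c : {ffun 'I_s -> bool}) : R :=
  \big[Rmult/1]_i (if c i then x else 1 - x).
Definition Ex (s : nat) (x : R) (f : {ffun 'I_s -> bool} -> R) : R :=
  \big[Rplus/0]_c (colw x c * f c).

Lemma factor (A : finType) (s : nat) (p : A -> R) (G : A -> {ffun 'I_s -> bool} -> R) :
  \big[Rplus/0]_(w : outcome A s) (weight p w * \big[Rmult/1]_u G u (col w u)) =
  \big[Rmult/1]_u Ex (p u) (G u).
Proof.
rewrite /Ex bigA_distr_bigA /=.
pose h (W : {ffun A -> {ffun 'I_s -> bool}}) : outcome A s := [ffun k => W k.2 k.1].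
pose g (w : outcome A s) : {ffun A -> {ffun 'I_s -> bool}} := [ffun u => col w u].
have hg : cancel h g.
  by move=> W; apply/ffunP => u; apply/ffunP => i; rewrite !ffunE.
have gh : cancel g h.
  by move=> w; apply/ffunP => [[i u]]; rewrite !ffunE.
rewrite (reindex h) /=; last by apply: onW_bij; exists g.
apply: eq_bigr => W _.
rewrite big_split /=.
have -> : weight p (h W) = \big[Rmult/1]_u colw (p u) (W u).
  rewrite /weight /colw.
  rewrite (eq_bigr (fun k : 'I_s * A => if W k.2 k.1 then p k.2 else 1 - p k.2)); last first.
    by move=> k _; rewrite ffunE.
  rewrite -(pair_bigA _ (fun i u => if W u i then p u else 1 - p u)) /=.
  by rewrite exchange_big.
congr (_ * _); apply: eq_bigr => u _; congr (G u _).
by apply/ffunP => i; rewrite !ffunE.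
Qed.

Lemma colw_ge0 s x (c : {ffun 'I_s -> bool}) : 0 <= x <= 1 -> 0 <= colw x c.
Proof. move=> hx; apply: prodR_ge0 => i _; case: (c i); lra. Qed.

Lemma Ex_prod s x (g : 'I_s -> bool -> R) :
  Ex x (fun c => \big[Rmult/1]_i g i (c i)) =
  \big[Rmult/1]_i (x * g i true + (1 - x) * g i false).
Proof.
symmetry.
rewrite (eq_bigr (fun i => \big[Rplus/0]_(b : bool) ((if b then x else 1 - x) * g i b))); last first.
  by move=> i _; rewrite big_bool.
rewrite bigA_distr_bigA /Ex; apply: eq_bigr => c _.
by rewrite big_split.
Qed.

Lemma Ex_add s x (f g : {ffun 'I_s -> bool} -> R) :
  Ex x (fun c => f c + g c) = Ex x f + Ex x g.
Proof.
rewrite /Ex -big_split; apply: eq_bigr => c _ /=; ring.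
Qed.

Lemma Ex_scale s x a (f : {ffun 'I_s -> bool} -> R) :
  Ex x (fun c => a * f c) = a * Ex x f.
Proof.
rewrite /Ex mul_sum; apply: eq_bigr => c _ /=; ring.
Qed.

Lemma Ex_le s x (f g : {ffun 'I_s -> bool} -> R) : 0 <= x <= 1 ->
  (forall c, f c <= g c) -> Ex x f <= Ex x g.
Proof.
move=> hx H; apply: sumR_le => c _.
apply: Rmult_le_compat_l; [exact: colw_ge0 | exact: H].
Qed.

Lemma Ex_1 s x : Ex (s := s) x (fun _ => 1) = 1.
Proof.
transitivity (Ex (s := s) x (fun c => \big[Rmult/1]_(i : 'I_s) (fun _ _ => 1) i (c i))).
  by rewrite /Ex; apply: eq_bigr => c _; rewrite big1.
rewrite (Ex_prod x (fun _ _ => 1)) big1 //= => i _; ring.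
Qed.

Lemma Ex_bit s x (i : 'I_s) : Ex x (fun c => if c i then 1 else 0) = x.
Proof.
have := Ex_prod x (fun j b => if j == i then (if b then 1 else 0) else 1).
rewrite (bigD1 i) //= eqxx big1; last first.
  by move=> j /negbTE ->; ring.
move=> H; rewrite -[RHS]Rmult_1_r -[X in _ = X * 1]Rmult_1_r -[x * 1 * 1]/(x * 1 * 1).
have -> : x * 1 * 1 = (x * 1 + (1 - x) * 0) * 1 by ring.
rewrite -H /Ex; apply: eq_bigr => c _; congr (_ * _).
rewrite (bigD1 i) //= eqxx big1; first ring.
by move=> j /negbTE ->.
Qed.

Definition cnt s (c : {ffun 'I_s -> bool}) (k : nat) : nat := #|[set i : 'I_s | (i < k)%N && c i]|.

Lemma cnt_mono s (c : {ffun 'I_s -> bool}) k l : (k <= l)%N -> (cnt c k <= cnt c l)%N.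
Proof.
move=> kl; apply: subset_leq_card; apply/subsetP => i; rewrite !inE => /andP [ik ->].
by rewrite (leq_trans ik kl).
Qed.

Lemma Ex_cnt s x : Ex x (fun c : {ffun 'I_s -> bool} => INR (cnt c s)) = INR s * x.
Proof.
have H : forall c : {ffun 'I_s -> bool}, INR (cnt c s) = \big[Rplus/0]_i (if c i then 1 else 0).
  move=> c; rewrite /cnt INR_card; apply: eq_bigr => i _; by rewrite ltn_ord.
rewrite /Ex (eq_bigr (fun c => \big[Rplus/0]_i (colw x c * if c i then 1 else 0))); last first.
  by move=> c _; rewrite H mul_sum.
rewrite exchange_big /=.
rewrite (eq_bigr (fun _ => x)); last by move=> i _; exact: Ex_bit.
by rewrite big_const_ord iter_sum.
Qed.

Lemma prod_const (I : finType) (P : pred I) a :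
  \big[Rmult/1]_(i | P i) a = a ^ #|P|.
Proof. by rewrite big_const iter_pow. Qed.

Lemma sum_const (I : finType) (P : pred I) a :
  \big[Rplus/0]_(i | P i) a = INR #|P| * a.
Proof. by rewrite big_const iter_sum. Qed.

Lemma prod_ind (I : finType) (B : pred I) :
  \big[Rmult/1]_i (if B i then 1 else 0) = if [forall i, B i] then 1 else 0.
Proof.
case: (boolP [forall i, B i]) => [/fintype.forallP H|].
  by rewrite big1 // => i _; rewrite H.
rewrite negb_forall => /fintype.existsP [j /negbTE Hj].
by rewrite (bigD1 j) //= Hj Rmult_0_l.
Qed.

Lemma sum_single (T : finType) (S : {set T}) :
  \big[Rplus/0]_i0 (if S == [set i0] then 1 else 0) = if #|S| == 1%N then 1 else 0.
Proof.
case: (boolP (#|S| == 1%N)) => [/cards1P [x ->]|H].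
  rewrite (bigD1 x) //= eqxx big1; first ring.
  by move=> i /negbTE Hi; case: eqP => // /setP /(_ x); rewrite !inE eqxx eq_sym Hi.
rewrite big1 // => i _; case: eqP => // E.
by move: H; rewrite E cards1.
Qed.

Lemma Ex_sum s x (I : finType) (F : I -> {ffun 'I_s -> bool} -> R) :
  Ex x (fun c => \big[Rplus/0]_i F i c) = \big[Rplus/0]_i Ex x (F i).
Proof.
rewrite /Ex (eq_bigr (fun c => \big[Rplus/0]_i (colw x c * F i c))); last first.
  by move=> c _; rewrite mul_sum.
by rewrite exchange_big.
Qed.

Lemma Ex_cnt1 s x k : (k <= s)%N ->
  Ex x (fun c : {ffun 'I_s -> bool} => if cnt c k == 1%N then 1 else 0) =
  INR k * x * (1 - x) ^ (k - 1).
Proof.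
move=> ks.
pose g (i0 j : 'I_s) (b : bool) : R := if ((j < k)%N && b) == (j == i0) then 1 else 0.
transitivity (Ex x (fun c => \big[Rplus/0]_i0 \big[Rmult/1]_j g i0 j (c j))).
  rewrite /Ex; apply: eq_bigr => c _; congr (_ * _).
  rewrite /cnt -sum_single; apply: eq_bigr => i0 _.
  rewrite /g prod_ind; congr (if _ then _ else _).
  apply/idP/idP => [/eqP E|/fintype.forallP H].
    apply/fintype.forallP => j; move/setP: E => /(_ j); rewrite !inE => ->; exact: eqxx.
  by apply/eqP/setP => j; rewrite !inE; apply/eqP; exact: (H j).
rewrite Ex_sum.
rewrite (eq_bigr (fun i0 : 'I_s => if (i0 < k)%N then x * (1 - x) ^ (k - 1) else 0)); last first.
  move=> i0 _; rewrite (Ex_prod x (g i0)) (bigD1 i0) //= /g eqxx andbT.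
  rewrite (eq_bigr (fun j : 'I_s => if (j < k)%N then 1 - x else 1)); last first.
    by move=> j /negbTE ->; case: (j < k)%N => /=; ring.
  case ik: (i0 < k)%N => /=; last by ring.
  rewrite -big_mkcondr /= prod_const.
  have -> : #|[pred j : 'I_s | (j != i0) && (j < k)%N]| = (k - 1)%N.
    have E := cardD1 i0 [pred j : 'I_s | (j < k)%N].
    rewrite card_lt // inE ik add1n in E.
    have -> : (k - 1)%N = #|[predD1 [pred j : 'I_s | (j < k)%N] & i0]|.
      by rewrite {1}E subSS subn0.
    apply: eq_card => j; by rewrite !inE.
  ring.
rewrite -big_mkcond /= sum_const.
have -> : #|[pred i0 : 'I_s | (i0 < k)%N]| = k by rewrite card_lt.
ring.
Qed.

Lemma frac_le a b c d : 0 < b -> 0 < d -> a * d <= c * b -> a / b <= c / d.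
Proof.
move=> hb hd h.
have e1 : a / b = (a * d) * / (b * d) by field; split; lra.
have e2 : c / d = (c * b) * / (b * d) by field; split; lra.
rewrite e1 e2; apply: Rmult_le_compat_r => //.
left; apply: Rinv_0_lt_compat; nra.
Qed.

Definition Zc m (c : {ffun 'I_m.+2 -> bool}) : R :=
  (if cnt c m.+1 == 1%N then 1 else 0) / INR m.+1 -
  (if cnt c m.+2 == 1%N then 1 else 0) / INR m.+2.

Lemma Zc_le m (c : {ffun 'I_m.+2 -> bool}) : Zc c <= 1 / INR m.+1.
Proof.
have h1 := pos_INR m.
rewrite /Zc !S_INR.
have h2 : 0 <= (if cnt c m.+2 == 1%N then 1 else 0) / (INR m + 1 + 1).
  apply: Rmult_le_pos; [case: ifP => _; lra | left; apply: Rinv_0_lt_compat; lra].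
have h3 : (if cnt c m.+1 == 1%N then 1 else 0) / (INR m + 1) <= 1 / (INR m + 1).
  apply: Rmult_le_compat_r; [left; apply: Rinv_0_lt_compat; lra | case: ifP => _; lra].
lra.
Qed.

Lemma Zc_sq m (c : {ffun 'I_m.+2 -> bool}) :
  Zc c ^ 2 <= INR (cnt c m.+2) / (INR m.+2 * INR m.+1).
Proof.
have h1 := pos_INR m.
have ab := cnt_mono c (leqnSn m.+1).
rewrite /Zc.
move: ab; set a := cnt c m.+1; set b := cnt c m.+2 => ab.
have hb := pos_INR b.
have P2 : 0 < INR m.+2 * INR m.+1 by rewrite !S_INR; nra.
case: (eqVneq a 1%N) => ha; case: (eqVneq b 1%N) => hb1.
- rewrite hb1; change (INR 1) with 1.
  have -> : 1 / INR m.+1 - 1 / INR m.+2 = 1 / (INR m.+2 * INR m.+1).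
    rewrite !S_INR; field; split; lra.
  set t := 1 / _.
  have : 0 < t <= 1.
    rewrite /t; split; first by apply: Rdiv_lt_0_compat; lra.
    have P1 : 1 <= INR m.+2 * INR m.+1 by rewrite !S_INR; nra.
    have : 1 / (INR m.+2 * INR m.+1) <= 1 / 1 by apply: frac_le; lra.
    by have -> : 1 / 1 = 1 by field.
  move=> ht; simpl; nra.
  have b2 : (2 <= b)%N by move: ab hb1; rewrite ha; case: (b) => [|[|k]].
  have hb2 : 2 <= INR b by apply: (le_INR 2); apply/leP.
  have -> : 1 / INR m.+1 - 0 / INR m.+2 = 1 / INR m.+1 by rewrite /Rdiv; ring.
  have -> : (1 / INR m.+1) ^ 2 = 1 / (INR m.+1 * INR m.+1) by field; rewrite S_INR; lra.
  apply: frac_le; rewrite ?S_INR; nra.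
- rewrite hb1; change (INR 1) with 1.
  have -> : 0 / INR m.+1 - 1 / INR m.+2 = - (1 / INR m.+2) by rewrite /Rdiv; ring.
  have -> : (- (1 / INR m.+2)) ^ 2 = 1 / (INR m.+2 * INR m.+2) by field; rewrite !S_INR; lra.
  apply: frac_le; rewrite ?S_INR; nra.
- have -> : 0 / INR m.+1 - 0 / INR m.+2 = 0 by rewrite /Rdiv; ring.
  have : 0 <= INR b / (INR m.+2 * INR m.+1) by apply: Rdiv_le_0_compat.
  simpl; nra.
Qed.

Lemma Ex_ext s x (f g : {ffun 'I_s -> bool} -> R) :
  (forall c, f c = g c) -> Ex x f = Ex x g.
Proof. by move=> H; rewrite /Ex; apply: eq_bigr => c _; rewrite H. Qed.

Lemma Ex_Zc m x : Ex x (@Zc m) = x ^ 2 * (1 - x) ^ m.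
Proof.
rewrite (@Ex_ext _ x _ (fun c => (1 / INR m.+1) * (if cnt c m.+1 == 1%N then 1 else 0) +
                   (- (1 / INR m.+2)) * (if cnt c m.+2 == 1%N then 1 else 0))); last first.
  by move=> c; rewrite /Zc /Rdiv; ring.
rewrite Ex_add !Ex_scale !Ex_cnt1 // !subn1 !succnK.
change ((1 - x) ^ m.+1) with ((1 - x) * (1 - x) ^ m).
have h1 := pos_INR m.
rewrite !S_INR; field; split; lra.
Qed.

Definition qf (y : R) := 1 + y + y^2 / (2 * (1 - y/3)).
Definition ff (y : R) := qf y * exp (- y).
Definition dff (y : R) := exp (- y) * y^3 / (18 * (1 - y/3)^2).

Lemma ff_der y : y < 3 -> is_derive ff y (dff y).
Proof.
move=> hy. rewrite /ff /qf /dff.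
auto_derive.
  lra.
have h : 1 - y/3 <> 0 by lra.
field; lra.
Qed.

Lemma exp_bound y : y < 3 -> exp y <= qf y.
Proof.
move=> hy.
have key : 1 <= ff y.
  have hmax : Rmax 0 y < 3 by apply: Rmax_lub_lt; lra.
  have H1 : forall x, Rmin 0 y < x < Rmax 0 y -> is_derive ff x (dff x).
    move=> x hx; apply: ff_der; lra.
  have H2 : forall x, Rmin 0 y <= x <= Rmax 0 y -> continuity_pt ff x.
    move=> x hx; apply/continuity_pt_filterlim; apply: ex_derive_continuous.
    eexists; apply: ff_der; lra.
  have [c [hc he]] := MVT_gen ff 0 y dff H1 H2.
  have ff0 : ff 0 = 1 by rewrite /ff /qf Ropp_0 exp_0; field.
  have hc3 : c < 3 by lra.
  have pos : 0 < 18 * (1 - c/3)^2 by apply: Rmult_lt_0_compat; [lra| apply: pow_lt; lra].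
  have : 0 <= dff c * (y - 0).
    rewrite /dff.
    have ep := exp_pos (-c).
    destruct (Rle_dec 0 y) as [y0|y0].
    - have c0 : 0 <= c.
        move: hc; rewrite /Rmin; destruct (Rle_dec 0 y); lra.
      apply: Rmult_le_pos; last lra.
      rewrite /Rdiv; apply: Rmult_le_pos; last (apply: Rlt_le; apply: Rinv_0_lt_compat; lra).
      apply: Rmult_le_pos; [lra|]. by apply: pow_le.
    - have c0 : c <= 0.
        move: hc; rewrite /Rmax; destruct (Rle_dec 0 y); lra.
      have : exp (- c) * c ^ 3 / (18 * (1 - c / 3) ^ 2) <= 0.
        rewrite /Rdiv. apply: Rmult_le_0_r; last (apply: Rlt_le; apply: Rinv_0_lt_compat; lra).
        apply: Rmult_le_0_l; [lra|].
        have -> : c^3 = - ((-c) * (-c) * (-c)) by ring.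
        have : 0 <= (-c)*(-c)*(-c) by apply: Rmult_le_pos; [apply: Rmult_le_pos|]; lra.
        lra.
      nra.
  lra.
move: key; rewrite /ff.
have ep := exp_pos y.
have : exp (-y) * exp y = 1 by rewrite -exp_plus; replace (-y + y) with 0 by ring; exact exp_0.
nra.
Qed.

Lemma mgf m x th : 0 <= x <= 1 -> 0 <= th -> th < 3 * INR m.+1 ->
  Ex x (fun c : {ffun 'I_m.+2 -> bool} => exp (th * Zc c)) <=
  exp (th * (x ^ 2 * (1 - x) ^ m) +
       th ^ 2 * (1 / (2 * (1 - th / (3 * INR m.+1)))) * (x / INR m.+1)).
Proof.
move=> hx hth hth3.
have hm := pos_INR m.
have hn : 0 < INR m.+1 by rewrite S_INR; lra.
set K := 1 / (2 * (1 - th / (3 * INR m.+1))).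
have hK0 : 0 < 2 * (1 - th / (3 * INR m.+1)).
  have : th / (3 * INR m.+1) < 1.
    have -> : 1 = (3 * INR m.+1) / (3 * INR m.+1) by field; lra.
    apply: Rmult_lt_compat_r; [apply: Rinv_0_lt_compat; lra | lra].
  lra.
have hK : 0 <= K by apply: Rlt_le; apply: Rdiv_lt_0_compat; lra.
set P := INR m.+2 * INR m.+1.
have hP : 0 < P by rewrite /P !S_INR; nra.
apply: (Rle_trans _ (Ex x (fun c : {ffun 'I_m.+2 -> bool} => (1 + th * Zc c) + (th ^ 2 * K / P) * INR (cnt c m.+2)))).
  apply: Ex_le => // c.
  have hz := Zc_le c.
  have hz2 := Zc_sq c.
  set z := Zc c in hz hz2 *.
  have hy : th * z <= th / INR m.+1.
    have -> : th / INR m.+1 = th * (1 / INR m.+1) by rewrite /Rdiv; ring.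
    by apply: Rmult_le_compat_l.
  have hy3 : th * z < 3.
    apply: (Rle_lt_trans _ _ _ hy).
    have -> : 3 = (3 * INR m.+1) / INR m.+1 by field; lra.
    apply: Rmult_lt_compat_r; [apply: Rinv_0_lt_compat; lra | lra].
  apply: (Rle_trans _ _ _ (exp_bound hy3)).
  rewrite /qf.
  have hden : 1 / (2 * (1 - th * z / 3)) <= K.
    apply: frac_le; try lra.
    have : th * z / 3 <= th / (3 * INR m.+1).
      have -> : th / (3 * INR m.+1) = th / INR m.+1 / 3 by field; lra.
      lra.
    lra.
  have -> : (th * z) ^ 2 / (2 * (1 - th * z / 3)) = th ^ 2 * z ^ 2 * (1 / (2 * (1 - th * z / 3))).
    field; lra.
  have e2 : th ^ 2 * K / P * INR (cnt c m.+2) = th ^ 2 * K * (INR (cnt c m.+2) / P).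
    by field; lra.
  rewrite e2.
  have h0 : 0 <= th ^ 2 * z ^ 2 by apply: Rmult_le_pos; apply: pow2_ge_0.
  have h0' : 0 <= th ^ 2 by apply: pow2_ge_0.
  have hh1 : th ^ 2 * z ^ 2 * (1 / (2 * (1 - th * z / 3))) <= th ^ 2 * z ^ 2 * K.
    by apply: Rmult_le_compat_l.
  have hh2 : th ^ 2 * z ^ 2 * K <= th ^ 2 * K * (INR (cnt c m.+2) / P).
    have -> : th ^ 2 * z ^ 2 * K = th ^ 2 * K * z ^ 2 by ring.
    apply: Rmult_le_compat_l => //; exact: Rmult_le_pos.
  lra.
rewrite (Ex_add x (fun c : {ffun 'I_m.+2 -> bool} => 1 + th * Zc c) (fun c => th ^ 2 * K / P * INR (cnt c m.+2))).
rewrite (Ex_add x (fun _ : {ffun 'I_m.+2 -> bool} => 1) (fun c => th * Zc c)).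
rewrite Ex_1 (Ex_scale x th (@Zc m)) (Ex_scale x (th ^ 2 * K / P) (fun c : {ffun 'I_m.+2 -> bool} => INR (cnt c m.+2))).
rewrite Ex_Zc Ex_cnt.
apply: (Rle_trans _ (1 + (th * (x ^ 2 * (1 - x) ^ m) + th ^ 2 * K * (x / INR m.+1)))); last exact: exp_ineq1_le.
right; rewrite /P !S_INR; field; lra.
Qed.

Lemma mgf0 m x th : 0 <= x <= 1 -> 0 <= th ->
  Ex x (fun c : {ffun 'I_m.+2 -> bool} => exp (th * Zc c)) <=
  1 + exp (th / INR m.+1) * (INR m.+2 * x).
Proof.
move=> hx hth.
have hm := pos_INR m.
have hn : 0 < INR m.+1 by rewrite S_INR; lra.
apply: (Rle_trans _ (Ex x (fun c : {ffun 'I_m.+2 -> bool} => 1 + exp (th / INR m.+1) * INR (cnt c m.+2)))).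
  apply: Ex_le => // c.
  have he := exp_pos (th / INR m.+1).
  case: (eqVneq (cnt c m.+2) 0%N) => h0.
    have h1 : cnt c m.+1 = 0%N.
      by apply/eqP; rewrite -leqn0 -h0; apply: cnt_mono.
    have -> : Zc c = 0 by rewrite /Zc h0 h1 /Rdiv /=; ring.
    rewrite h0 Rmult_0_r exp_0 /=; lra.
  have h1 : 1 <= INR (cnt c m.+2).
    apply: (le_INR 1); apply/leP; by rewrite lt0n.
  have : exp (th * Zc c) <= exp (th / INR m.+1).
    have hz := Zc_le c.
    have : th * Zc c <= th / INR m.+1.
      have -> : th / INR m.+1 = th * (1 / INR m.+1) by rewrite /Rdiv; ring.
      by apply: Rmult_le_compat_l.
    case=> [hlt|->]; [left; exact: exp_increasing | right; done].
  nra.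
rewrite (Ex_add x (fun _ : {ffun 'I_m.+2 -> bool} => 1)
   (fun c => exp (th / INR m.+1) * INR (cnt c m.+2))).
rewrite Ex_1 (Ex_scale x (exp (th / INR m.+1)) (fun c : {ffun 'I_m.+2 -> bool} => INR (cnt c m.+2))).
by rewrite Ex_cnt; right.
Qed.

Lemma exp_pow a k : exp a ^ k = exp (a * INR k).
Proof.
elim: k => [|k IH]; first by rewrite /= Rmult_0_r exp_0.
by rewrite S_INR -tech_pow_Rmult IH -exp_plus; congr exp; ring.
Qed.

Lemma mean_bound m x : (1 <= m)%N -> 0 <= x <= 1 ->
  x ^ 2 * (1 - x) ^ m <= x / (exp 1 * INR m).
Proof.
move=> hm hx.
have hM : 1 <= INR m by apply: (le_INR 1); apply/leP.
have e1 := exp_pos 1.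
have h1 : (1 - x) ^ m <= exp (- x * INR m).
  rewrite -exp_pow; apply: pow_incr; split; first lra.
  have := exp_ineq1_le (- x); lra.
set y := x * INR m.
have hy : 0 <= y by rewrite /y; nra.
have h2 : y * exp (- y) <= / exp 1.
  have h3 : y <= exp (y - 1) by have := exp_ineq1_le (y - 1); lra.
  have h4 : exp (y - 1) * exp (- y) = / exp 1.
    rewrite -exp_plus -exp_Ropp; congr exp; ring.
  have := exp_pos (- y); nra.
have h5 : x * exp (- x * INR m) <= / (exp 1 * INR m).
  have -> : - x * INR m = - y by rewrite /y; ring.
  have -> : / (exp 1 * INR m) = / exp 1 * / INR m by field; lra.
  have -> : x = y * / INR m by rewrite /y; field; lra.
  have hi : 0 < / INR m by apply: Rinv_0_lt_compat; lra.
  have -> : y * / INR m * exp (- y) = (y * exp (- y)) * / INR m by ring.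
  by apply: Rmult_le_compat_r; lra.
have h6 : 0 <= (1 - x) ^ m by apply: pow_le; lra.
have -> : x / (exp 1 * INR m) = x * / (exp 1 * INR m) by [].
have -> : x ^ 2 * (1 - x) ^ m = x * (x * (1 - x) ^ m) by ring.
apply: Rmult_le_compat_l; first lra.
apply: Rle_trans h5; apply: Rmult_le_compat_l; lra.
Qed.

Lemma weight_ge0 (A : finType) s (p : A -> R) (w : outcome A s) :
  (forall u, 0 <= p u <= 1) -> 0 <= weight p w.
Proof.
move=> hp; apply: prodR_ge0 => k _; move: (hp k.2) => [H1 H2]; case: (w k); [exact: H1 | by apply: Rge_le; apply: Rge_minus; apply: Rle_ge].
Qed.

Lemma chernoff (A : finType) (p : A -> R) m (hp : forall u, 0 <= p u <= 1)
  th t0 (E : outcome A m.+2 -> bool) : 0 <= th ->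
  (forall w, E w -> t0 <= \big[Rplus/0]_u Zc (col w u)) ->
  prob p E <= exp (- th * t0) * \big[Rmult/1]_u Ex (p u) (fun c : {ffun 'I_m.+2 -> bool} => exp (th * Zc c)).
Proof.
move=> hth HE.
rewrite /prob big_mkcond /=.
apply: (Rle_trans _ (\big[Rplus/0]_w (weight p w * exp (th * (\big[Rplus/0]_u Zc (col w u) - t0))))).
  apply: sumR_le => w _.
  have hw := weight_ge0 w hp.
  have he := exp_pos (th * (\big[Rplus/0]_u Zc (col w u) - t0)).
  case: (boolP (E w)) => Ew; last by apply: Rmult_le_pos; lra.
  have := HE w Ew => hS.
  have : 1 <= exp (th * (\big[Rplus/0]_u Zc (col w u) - t0)).
    have h0 : 0 <= th * (\big[Rplus/0]_u Zc (col w u) - t0) by apply: Rmult_le_pos; lra.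
    have := exp_ineq1_le (th * (\big[Rplus/0]_u Zc (col w u) - t0)); lra.
  nra.
rewrite -(factor p (fun u c => exp (th * Zc c))) mul_sum.
right; apply: eq_bigr => w _.
rewrite Rmult_minus_distr_l /Rminus exp_plus mul_sum exp_sum.
have -> : - (th * t0) = - th * t0 by ring.
ring.
Qed.

Lemma Rhat_eq (A : finType) m (w : outcome A m.+2) :
  Rhat w m.+1 - Rhat w m.+2 = \big[Rplus/0]_u Zc (col w u).
Proof.
have H : forall k u, Un w k u = (cnt (col w u) k == 1%N).
  move=> k u; rewrite /Un /nact /cnt; congr (_ == _).
  by apply: eq_card => i; rewrite !inE ffunE.
rewrite /Rhat !INR_card /Zc /Rdiv.
have E1 : \big[Rplus/0]_u (if Un w m.+1 u then 1 else 0) =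
   \big[Rplus/0]_u (if cnt (col w u) m.+1 == 1%N then 1 else 0) by apply: eq_bigr => u _; rewrite H.
have E2 : \big[Rplus/0]_u (if Un w m.+2 u then 1 else 0) =
   \big[Rplus/0]_u (if cnt (col w u) m.+2 == 1%N then 1 else 0) by apply: eq_bigr => u _; rewrite H.
rewrite E1 E2; symmetry.
rewrite (eq_bigr (fun u => / INR m.+1 * (if cnt (col w u) m.+1 == 1%N then 1 else 0) +
        (- / INR m.+2) * (if cnt (col w u) m.+2 == 1%N then 1 else 0))); last first.
  by move=> u _; ring.
rewrite big_split /= -!mul_sum.
ring.
Qed.

Lemma exp_le x y : x <= y -> exp x <= exp y.
Proof. case=> [h|->]; [left; exact: exp_increasing | right; done]. Qed.

Lemma Ex_ge0 s x (f : {ffun 'I_s -> bool} -> R) : 0 <= x <= 1 -> (forall c, 0 <= f c) -> 0 <= Ex x f.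
Proof. move=> hx H; apply: sumR_ge0 => c _; apply: Rmult_le_pos; [exact: colw_ge0 | exact: H]. Qed.

Lemma alg r V n1 c0 : 0 < r -> 0 < V -> 0 < n1 ->
   - (r/(V + 1/(3*n1)*r)) * (c0 + r + 1/(3*n1) * (r*r/(2*V))) + (r/(V + 1/(3*n1)*r)) * c0
   + (r/(V + 1/(3*n1)*r))^2 * (1/(2*(1 - (r/(V + 1/(3*n1)*r))/(3*n1)))) * V = - (r*r/(2*V)).
Proof.
intros hr hV hn.
assert (h1 : V + 1/(3*n1)*r > 0).
{ assert (0 < 1/(3*n1) * r). apply Rmult_lt_0_compat; [apply Rdiv_lt_0_compat; lra | lra]. lra. }
assert (h2 : 1 - (r/(V + 1/(3*n1)*r))/(3*n1) = V / (V + 1/(3*n1)*r)).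
{ field. split; nra. }
rewrite h2.
field; repeat split; nra.
Qed.

Theorem mainTheorem3 (A : finType) (p : A -> R)
  (hp : forall u : A, 0 <= p u <= 1)
  (s : nat) (hs : (3 <= s)%N) (delta : R) (hd : 0 < delta < 1) :
  prob p (fun w : outcome A s =>
     Rleb (Rhat w s)
          (Rhat w (s - 1)%N
           - lam p / (exp 1 * INR (s - 2)%N)
           - sqrt (2 * lam p / INR (s - 1)%N * ln (1 / delta))
           - 1 / (3 * INR (s - 1)%N) * ln (1 / delta)))
   <= delta.
Proof.
move: hs; case: s => [|[|m]] // hs.
have hm1 : (1 <= m)%N by [].
rewrite (_ : (m.+2 - 1)%N = m.+1); last by rewrite subn1.
rewrite (_ : (m.+2 - 2)%N = m); last by rewrite -addn2 addnK.
have hM : 1 <= INR m by apply: (le_INR 1); apply/leP.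
have hn1 : 0 < INR m.+1 by rewrite S_INR; lra.
have hn2 : 0 < INR m.+2 by rewrite !S_INR; lra.
have hL : 0 < ln (1 / delta).
  rewrite -ln_1; apply: ln_increasing; first lra.
  rewrite /Rdiv Rmult_1_l -{1}Rinv_1; apply: Rinv_lt_contravar; lra.
have hexpL : exp (- ln (1 / delta)) = delta.
  have h := exp_ln (1 / delta) ltac:(apply: Rdiv_lt_0_compat; lra).
  have h2 : exp (- ln (1 / delta)) * exp (ln (1 / delta)) = 1.
    by rewrite -exp_plus Rplus_opp_l exp_0.
  rewrite h in h2.
  have : exp (- ln (1 / delta)) = exp (- ln (1 / delta)) * (1 / delta) * delta by field; lra.
  rewrite h2; lra.
have hlam : 0 <= lam p by apply: sumR_ge0 => u _; case: (hp u).
have hr0 : 0 <= sqrt (2 * lam p / INR m.+1 * ln (1 / delta)) by apply: sqrt_pos.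
set L := ln (1 / delta) in hL hexpL hr0 *.
set c0 := lam p / (exp 1 * INR m).
have hc0 : 0 <= c0 by apply: Rdiv_le_0_compat => //; apply: Rmult_lt_0_compat; [exact: exp_pos| lra].
set r := sqrt (2 * lam p / INR m.+1 * L) in hr0 *.
set t0 := c0 + r + 1 / (3 * INR m.+1) * L.
have HE : forall w : outcome A m.+2,
   Rleb (Rhat w m.+2) (Rhat w m.+1 - c0 - r - 1 / (3 * INR m.+1) * L) ->
   t0 <= \big[Rplus/0]_u Zc (col w u).
  move=> w; rewrite /Rleb; case: Rle_dec => // h _.
  rewrite -Rhat_eq /t0; lra.
case: (Rle_lt_or_eq_dec 0 (lam p) hlam) => [hpos|hzero].
-
  set V := lam p / INR m.+1.
  have hV : 0 < V by apply: Rdiv_lt_0_compat.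
  have hr : 0 < r.
    apply: sqrt_lt_R0; apply: Rmult_lt_0_compat => //; apply: Rmult_lt_0_compat; first lra.
    exact: Rinv_0_lt_compat.
  have hr2 : L = r * r / (2 * V).
    rewrite /r sqrt_sqrt; last by apply: Rlt_le; apply: Rmult_lt_0_compat => //;
      apply: Rdiv_lt_0_compat; lra.
    rewrite /V; field; repeat split; lra.
  set th := r / (V + 1 / (3 * INR m.+1) * r).
  have hD : 0 < V + 1 / (3 * INR m.+1) * r.
    have : 0 < 1 / (3 * INR m.+1) * r by apply: Rmult_lt_0_compat => //; apply: Rdiv_lt_0_compat; lra.
    lra.
  have hth0 : 0 <= th by apply: Rlt_le; apply: Rdiv_lt_0_compat.
  have hth3 : th < 3 * INR m.+1.
    rewrite /th.
    set D := V + 1 / (3 * INR m.+1) * r in hD *.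
    have e1 : r / D * D = r by field; lra.
    have e2 : 3 * INR m.+1 * D = 3 * INR m.+1 * V + r by rewrite /D; field; lra.
    have : 0 < 3 * INR m.+1 * V by apply: Rmult_lt_0_compat => //; lra.
    nra.
  set K := 1 / (2 * (1 - th / (3 * INR m.+1))).
  apply: (Rle_trans _ _ _ (chernoff hp hth0 HE)).
  apply: (Rle_trans _ (exp (- th * t0) * \big[Rmult/1]_u
            exp (th * (p u ^ 2 * (1 - p u) ^ m) + th ^ 2 * K * (p u / INR m.+1)))).
    apply: Rmult_le_compat_l; first exact: Rlt_le (exp_pos _).
    apply: prodR_le => u _; split.
      by apply: Ex_ge0 => // c; apply: Rlt_le; apply: exp_pos.
    exact: mgf.
  rewrite -exp_sum -exp_plus -hexpL; apply: exp_le.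
  have hsum : \big[Rplus/0]_u (p u ^ 2 * (1 - p u) ^ m) <= c0.
    rewrite /c0 /lam /Rdiv Rmult_comm mul_sum; apply: sumR_le => u _.
    apply: (Rle_trans _ _ _ (mean_bound hm1 (hp u))); right; rewrite /Rdiv; ring.
  have hsum2 : \big[Rplus/0]_u (p u / INR m.+1) = V.
    by rewrite /V /lam /Rdiv Rmult_comm mul_sum; apply: eq_bigr => u _; ring.
  have hs3 : \big[Rplus/0]_u (th * (p u ^ 2 * (1 - p u) ^ m) + th ^ 2 * K * (p u / INR m.+1)) =
     th * \big[Rplus/0]_u (p u ^ 2 * (1 - p u) ^ m) + th ^ 2 * K * V.
    by rewrite big_split -!mul_sum hsum2.
  rewrite hs3.
  have := alg c0 hr hV hn1.
  rewrite -hr2 -/th -/K.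
  have : th * \big[Rplus/0]_u (p u ^ 2 * (1 - p u) ^ m) <= th * c0 by apply: Rmult_le_compat_l.
  rewrite /t0.
  lra.
-
  set th := 3 * INR m.+1.
  have hth0 : 0 <= th by rewrite /th; lra.
  apply: (Rle_trans _ _ _ (chernoff hp hth0 HE)).
  apply: (Rle_trans _ (exp (- th * t0) * \big[Rmult/1]_u exp (exp (th / INR m.+1) * (INR m.+2 * p u)))).
    apply: Rmult_le_compat_l; first exact: Rlt_le (exp_pos _).
    apply: prodR_le => u _; split.
      by apply: Ex_ge0 => // c; apply: Rlt_le; apply: exp_pos.
    apply: (Rle_trans _ _ _ (mgf0 _ (hp u) hth0)).
    exact: exp_ineq1_le.
  rewrite -exp_sum -exp_plus -hexpL; apply: exp_le.
  rewrite -mul_sum -mul_sum -/(lam p) -hzero !Rmult_0_r Rplus_0_r.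
  have : th * (1 / (3 * INR m.+1) * L) = L by rewrite /th; field; lra.
  have : 0 <= th * (c0 + r) by apply: Rmult_le_pos; lra.
  rewrite /t0; nra.
Qed.
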